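(* Let $\mathbb{M}$ be a partial group. Then (i) $N(\mathbb{M})$ is a subgroup of $\mathbb{M}$; (ii) $Z(\mathbb{M})$ is an abelian subgroup of $\mathbb{M}$; and (iii) $\mathrm{Inn}(\mathbb{M})\cong N(\mathbb{M})/Z(\mathbb{M})$.
   Context: Partial groups are regarded as simplicial sets whose $n$-simplices are the words $[x_1|\dots|x_n]$ in the domain of the partial product (faces multiply adjacent letters or delete the first/last letter; degeneracies insert the unit); $\Pi[x_1|\dots|x_n]=[x_1\cdots x_n]$. A subgroup of $\mathbb{M}$ is a subset $H\subseteq\mathbb{M}_1$ such that every word in $H$ is a simplex, closed under products and inverses. For $\eta,x\in\mathbb{M}_1$ write ${}^{\eta}x=\eta x\eta^{-1}$ when $[\eta|x|\eta^{-1}]$ is a simplex. $N(\mathbb{M})$ is the set of $\eta\in\mathbb{M}_1$ such that (i) for every $x\in\mathbb{M}_1$, $[\eta|x|\eta^{-1}]\in\mathbb{M}$ and $x\mapsto{}^{\eta}x$ extends to an automorphism of $\mathbb{M}$; (ii) for every simplex $[x_1|\dots|x_n]$ and $0\le i\le n$, $\omega_i=[{}^{\eta}x_1|\dots|{}^{\eta}x_i|\eta|x_{i+1}|\dots|x_n]$ is a simplex and $\Pi(\omega_0)=\dots=\Pi(\omega_n)$. $Z(\mathbb{M})$ is the set of $\eta\in N(\mathbb{M})$ with ${}^{\eta}x=x$ for all $x\in\mathbb{M}_1$. An automorphism $\alpha$ of $\mathbb{M}$ (simplicial automorphism) is inner if there is a simplicial homotopy $F\colon\mathbb{M}\times\Delta[1]\to\mathbb{M}$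 from $\alpha$ to $\mathrm{Id}_{\mathbb{M}}$; $\mathrm{Inn}(\mathbb{M})$ is the group of inner automorphisms. *)

(* Defs.v *)
From mathcomp Require Import all_boot.
Set Implicit Arguments. Unset Strict Implicit. Unset Printing Implicit Defensive.

(* Partial groups in the sense of Chermak: a set L, a domain D of words,
   a product Pi : D -> L and an involutory inversion.  Words are seq L. *)
Record partialGroup := PartialGroup {
  pg_carrier :> Type;
  pg_dom : seq pg_carrier -> Prop;
  pg_prod : seq pg_carrier -> pg_carrier;
  pg_inv : pg_carrier -> pg_carrier;
  pg_dom_letter : forall x, pg_dom [:: x];
  pg_dom_cat : forall u v, pg_dom (u ++ v) -> pg_dom u /\ pg_dom v;
  pg_prod_letter : forall x, pg_prod [:: x] = x;
  pg_prod_assoc : forall u v w, pg_dom (u ++ v ++ w) ->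
    pg_dom (u ++ pg_prod v :: w) /\ pg_prod (u ++ v ++ w) = pg_prod (u ++ pg_prod v :: w);
  pg_invK : forall x, pg_inv (pg_inv x) = x;
  pg_dom_inv : forall w, pg_dom w ->
    pg_dom (rev (map pg_inv w) ++ w) /\ pg_prod (rev (map pg_inv w) ++ w) = pg_prod [::]
}.

Section PartialGroupDefs.
Variable M : partialGroup.
Local Notation L := (pg_carrier M).
Local Notation D := (@pg_dom M).
Local Notation Pi := (@pg_prod M).
Local Notation inv := (@pg_inv M).

Definition pg_one : L := Pi [::].

(* Simplicial structure: n-simplices are the words of length n in D. *)
Definition simplex (w : seq L) : Prop := D w.

(* Face map d_i on [x_1|...|x_n]: d_0 deletes x_1, d_n deletes x_n,
   d_i (0<i<n) replaces x_i,x_(i+1) by x_i x_(i+1). *)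
Definition face (i : nat) (w : seq L) : seq L :=
  if i == 0 then behead w
  else if i == size w then take (size w).-1 w
  else take i.-1 w ++ Pi (take 2 (drop i.-1 w)) :: drop i.+1 w.

Definition degen (i : nat) (w : seq L) : seq L :=
  take i w ++ pg_one :: drop i w.

Definition simplicial_map (f : seq L -> seq L) : Prop :=
  [/\ (forall w, D w -> D (f w) /\ size (f w) = size w),
      (forall w i, D w -> 0 < size w -> i <= size w -> f (face i w) = face i (f w)) &
      (forall w i, D w -> i <= size w -> f (degen i w) = degen i (f w))].

Definition automorphism (f : seq L -> seq L) : Prop :=
  simplicial_map f /\
  exists g, [/\ simplicial_map g,
               (forall w, D w -> g (f w) = w) &
               (forall w, D w -> f (g w) = w)].

(* Delta[1]_n = monotone maps [n] -> [1], encoded by k <= n+1, the number of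
   vertices sent to 0 (vertex j goes to 0 iff j < k).  Under this encoding
   d_i k = (if i < k then k-1 else k) and s_i k = (if i < k then k+1 else k).
   A simplicial homotopy F : M x Delta[1] -> M from f to g restricts to f on
   the vertex 0 (k = n+1) and to g on the vertex 1 (k = 0). *)
Definition simplicial_homotopy (F : seq L -> nat -> seq L) (f g : seq L -> seq L) : Prop :=
  [/\ (forall w k, D w -> k <= (size w).+1 -> D (F w k) /\ size (F w k) = size w),
      (forall w, D w -> F w (size w).+1 = f w),
      (forall w, D w -> F w 0 = g w),
      (forall w k i, D w -> 0 < size w -> k <= (size w).+1 -> i <= size w ->
          F (face i w) (if i < k then k.-1 else k) = face i (F w k)) &
      (forall w k i, D w -> k <= (size w).+1 -> i <= size w ->
          F (degen i w) (if i < k then k.+1 else k) = degen i (F w k))].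

Definition inner_aut (a : seq L -> seq L) : Prop :=
  automorphism a /\ exists F, simplicial_homotopy F a id.

Fixpoint all_in (H : L -> Prop) (w : seq L) : Prop :=
  if w is x :: w' then H x /\ all_in H w' else True.

Definition subgroup (H : L -> Prop) : Prop :=
  [/\ (forall w, all_in H w -> D w),
      (forall w, all_in H w -> H (Pi w)) &
      (forall x, H x -> H (inv x))].

Definition abelian_subgroup (H : L -> Prop) : Prop :=
  subgroup H /\ forall x y, H x -> H y -> Pi [:: x; y] = Pi [:: y; x].

Definition conj (eta x : L) : L := Pi [:: eta; x; inv eta].

Definition omega (eta : L) (w : seq L) (i : nat) : seq L :=
  map (conj eta) (take i w) ++ eta :: drop i w.

Definition normalizer (eta : L) : Prop :=
  [/\ (forall x, D [:: eta; x; inv eta]),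
      (exists a, automorphism a /\ forall x, a [:: x] = [:: conj eta x]) &
      (forall w, D w ->
         (forall i, i <= size w -> D (omega eta w i)) /\
         (forall i j, i <= size w -> j <= size w ->
             Pi (omega eta w i) = Pi (omega eta w j)))].

Definition center (eta : L) : Prop :=
  normalizer eta /\ forall x, conj eta x = x.

End PartialGroupDefs.

(* Main.v *)
Require Import Defs.
From mathcomp Require Import all_boot.
From mathcomp Require Import zify.
Set Implicit Arguments. Unset Strict Implicit. Unset Printing Implicit Defensive.

Section PG.
Variable M : partialGroup.
Local Notation L := (pg_carrier M).
Local Notation D := (@pg_dom M).
Local Notation Pi := (@pg_prod M).
Local Notation inv := (@pg_inv M).
Local Notation one := (@pg_one M).

Definition winv (w : seq L) := rev (map inv w).

Lemma catDl u v : D (u ++ v) -> D u. Proof. by case/pg_dom_cat. Qed.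
Lemma catDr u v : D (u ++ v) -> D v. Proof. by case/pg_dom_cat. Qed.
Lemma D_nil : D [::].
Proof. exact: (@catDl [::] [:: one] (pg_dom_letter _)). Qed.
Lemma assocD u v w : D (u ++ v ++ w) -> D (u ++ Pi v :: w).
Proof. by case/pg_prod_assoc. Qed.
Lemma assocP u v w : D (u ++ v ++ w) -> Pi (u ++ v ++ w) = Pi (u ++ Pi v :: w).
Proof. by case/pg_prod_assoc. Qed.
Lemma winv_cat u v : winv (u ++ v) = winv v ++ winv u.
Proof. by rewrite /winv map_cat rev_cat. Qed.
Lemma winvK w : winv (winv w) = w.
Proof. by rewrite /winv map_rev revK -map_comp (eq_map (@pg_invK M)) map_id. Qed.
Lemma winvw_D w : D w -> D (winv w ++ w). Proof. by case/pg_dom_inv. Qed.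
Lemma winvw_P w : D w -> Pi (winv w ++ w) = one. Proof. by case/pg_dom_inv. Qed.
Lemma winvD w : D w -> D (winv w). Proof. by move/winvw_D/catDl. Qed.
Lemma wwinv_D w : D w -> D (w ++ winv w).
Proof. move=> Dw; have := winvw_D (winvD Dw); by rewrite winvK. Qed.
Lemma wwinv_P w : D w -> Pi (w ++ winv w) = one.
Proof. move=> Dw; have := winvw_P (winvD Dw); by rewrite winvK. Qed.
Lemma letter1 x : Pi [:: x] = x. Proof. exact: pg_prod_letter. Qed.

Lemma one_in u v : D (u ++ v) -> D (u ++ one :: v) /\ Pi (u ++ one :: v) = Pi (u ++ v).
Proof.
move=> Duv; have H : D (u ++ [::] ++ v) by [].
by split; [exact: (assocD H) | rewrite -(assocP H)].
Qed.
Lemma Pi_one_l v : D v -> Pi (one :: v) = Pi v.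
Proof. by move=> Dv; have [] := @one_in [::] v Dv. Qed.
Lemma Pi_one_r x : Pi [:: x; one] = x.
Proof. have [_ ->] := @one_in [:: x] [::] (pg_dom_letter x); exact: letter1. Qed.
Lemma Pi_one_l1 x : Pi [:: one; x] = x.
Proof. rewrite Pi_one_l ?letter1 //; exact: pg_dom_letter. Qed.

Lemma L5 u v : D (u ++ v) -> D (winv u ++ u ++ v) /\ Pi (winv u ++ u ++ v) = Pi v.
Proof.
move=> Duv; have H := winvw_D Duv; rewrite winv_cat -catA in H.
have H1 := catDr H; split => //.
have H2 : D ([::] ++ (winv u ++ u) ++ v) by rewrite /= -catA.
have -> : winv u ++ u ++ v = [::] ++ (winv u ++ u) ++ v by rewrite catA.
rewrite (assocP H2) /=.
rewrite winvw_P; [exact: Pi_one_l (catDr Duv)| exact: catDl Duv].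
Qed.
Lemma R5 u v : D (u ++ v) -> D (u ++ v ++ winv v) /\ Pi (u ++ v ++ winv v) = Pi u.
Proof.
move=> Duv; have H := wwinv_D Duv; rewrite winv_cat -!catA in H.
have H1 : D (u ++ v ++ winv v) by apply: (@catDl _ (winv u)); rewrite -!catA.
split => //.
have H2 : D (u ++ (v ++ winv v) ++ [::]) by rewrite cats0.
rewrite -[u ++ v ++ winv v]cats0 -catA (assocP H2) (wwinv_P (catDr Duv)).
have Du0 : D (u ++ [::]) by rewrite cats0; exact: catDl Duv.
by have [_ E] := @one_in u [::] Du0; rewrite cats0 in E.
Qed.

Lemma Pi_winv w : D w -> Pi (winv w) = inv (Pi w).
Proof.
move=> Dw; set g := Pi w; set h := Pi (winv w).
have E0 := wwinv_D Dw.
have H1 : D ([::] ++ w ++ winv w) by [].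
have D1 := assocD H1; have P1 := assocP H1; rewrite /= in D1 P1.
have H2 : D ([:: g] ++ winv w ++ [::]) by rewrite cats0.
have D2 := assocD H2; have P2 := assocP H2; rewrite cats0 in P2.
have Pgh : Pi [:: g; h] = one by rewrite -P2 -P1 wwinv_P.
have [D3 P3] := @L5 [:: g] [:: h] D2.
rewrite letter1 in P3. rewrite -P3 /=.
have H4 : D ([:: inv g] ++ [:: g; h] ++ [::]) by [].
by rewrite (assocP H4) Pgh Pi_one_r.
Qed.

Lemma inv_one : inv one = one.
Proof. by have := Pi_winv D_nil. Qed.

Lemma rcancel a b z : D [:: a; z] -> D [:: b; z] -> Pi [:: a; z] = Pi [:: b; z] -> a = b.
Proof.
move=> Da Db E.
have [Ha Pa] := @R5 [:: a] [:: z] Da; have [Hb Pb] := @R5 [:: b] [:: z] Db.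
rewrite letter1 in Pa; rewrite letter1 in Pb.
have Ha' : D ([::] ++ [:: a; z] ++ [:: inv z]) by [].
have Hb' : D ([::] ++ [:: b; z] ++ [:: inv z]) by [].
by rewrite -Pa -Pb /= (assocP Ha') (assocP Hb') /= E.
Qed.


Lemma size_face i (v : seq L) : 0 < size v -> i <= size v -> size (face i v) = (size v).-1.
Proof.
move=> n0 iv; rewrite /face; case: eqP => [_|i0]; first by rewrite size_behead.
case: eqP => [_|iS]; first by rewrite size_take; case: ifP => //; lia.
rewrite size_cat /= size_take size_drop; case: ifP; lia.
Qed.

Lemma nth_face i (v : seq L) j : 0 < size v -> i <= size v -> j < (size v).-1 ->
  nth one (face i v) j = if j.+1 < i then nth one v j
    else if (j.+1 == i) && (i < size v) then Pi [:: nth one v j; nth one v j.+1]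
    else nth one v j.+1.
Proof.
move=> n0 iv jn; rewrite /face; case: eqP => [->|i0]; first by rewrite nth_behead.
case: eqP => [iS|iS].
  rewrite nth_take; last lia.
  by rewrite iS ifT //; lia.
rewrite nth_cat size_take.
have -> : (if i.-1 < size v then i.-1 else size v) = i.-1 by rewrite ifT //; lia.
case: ltnP => ji.
  by rewrite nth_take // ifT //; lia.
have -> : drop i.-1 v = nth one v i.-1 :: nth one v i :: drop i.+1 v.
  rewrite (drop_nth one); last lia.
  rewrite (drop_nth one); last lia.
  by have -> : i.-1.+1 = i by lia.
case: (ltngtP j i.-1) => [Hj|Hj|Hj]; first lia.
- rewrite ifF; last lia.
  rewrite ifF; last lia.
  have -> : j - i.-1 = (j - i.-1).-1.+1 by lia.
  rewrite /= nth_drop; congr nth; lia.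
- rewrite Hj subnn /= ifF; last lia.
  rewrite ifT; last (apply/andP; split; [apply/eqP|]; lia).
  by rewrite take0; have -> : i.-1.+1 = i by lia.
Qed.

Lemma faceD i (v : seq L) : D v -> i <= size v -> D (face i v).
Proof.
move=> Dv iv; rewrite /face; case: eqP => [_|i0].
  case: v Dv {iv} => [|x v] Dv /=; first exact: D_nil.
  exact: (@catDr [:: x] v).
case: eqP => [_|iS].
  by apply: (@catDl _ (drop (size v).-1 v)); rewrite cat_take_drop.
apply: assocD.
have -> : drop i.+1 v = drop 2 (drop i.-1 v) by rewrite drop_drop; congr drop; lia.
by rewrite !cat_take_drop.
Qed.

Lemma face_Pi i (v : seq L) : D v -> 0 < i < size v -> Pi (face i v) = Pi v.
Proof.
move=> Dv /andP[i0 iv]; rewrite /face ifF; last lia.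
rewrite ifF; last lia.
have -> : drop i.+1 v = drop 2 (drop i.-1 v) by rewrite drop_drop; congr drop; lia.
have E : v = take i.-1 v ++ take 2 (drop i.-1 v) ++ drop 2 (drop i.-1 v).
  by rewrite !cat_take_drop.
rewrite E in Dv; rewrite -(assocP Dv); exact/esym/(congr1 Pi E).
Qed.

Lemma size_omega (eta : L) (w : seq L) i : i <= size w -> size (omega eta w i) = (size w).+1.
Proof. by move=> iw; rewrite /omega size_cat size_map /= size_take size_drop; case: ifP; lia. Qed.

Lemma nth_omega (eta : L) (w : seq L) i j : i <= size w ->
  nth one (omega eta w i) j =
   if j < i then conj eta (nth one w j) else if j == i then eta else nth one w j.-1.
Proof.
move=> iw; rewrite /omega nth_cat size_map size_take.
have -> : (if i < size w then i else size w) = i by case: ifP; lia.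
case: ltnP => ji; first by rewrite (nth_map one) ?nth_take // size_take; case: ifP; lia.
case: eqP => [->|jn]; first by rewrite subnn.
have -> : j - i = (j - i).-1.+1 by lia.
rewrite /= nth_drop; congr nth; lia.
Qed.

Lemma size_degen i (w : seq L) : size (degen i w) = (size w).+1.
Proof. by rewrite /degen size_cat /= addnS -size_cat cat_take_drop. Qed.

Lemma nth_degen i (w : seq L) j : i <= size w ->
  nth one (degen i w) j = if j < i then nth one w j else if j == i then one else nth one w j.-1.
Proof.
move=> iw; rewrite /degen nth_cat size_take.
have -> : (if i < size w then i else size w) = i by case: ifP; lia.
case: ltnP => ji; first by rewrite nth_take.
case: eqP => [->|jn]; first by rewrite subnn.
have -> : j - i = (j - i).-1.+1 by lia.
rewrite /= nth_drop; congr nth; lia.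
Qed.

Lemma degenD i (w : seq L) : D w -> i <= size w -> D (degen i w).
Proof.
move=> Dw iw; rewrite /degen; have := @one_in (take i w) (drop i w).
by rewrite cat_take_drop => /(_ Dw) [].
Qed.

Lemma degen_Pi i (w : seq L) : D w -> Pi (degen i w) = Pi w.
Proof.
move=> Dw; rewrite /degen; have := @one_in (take i w) (drop i w).
by rewrite cat_take_drop => /(_ Dw) [].
Qed.

Lemma eq_words (u v : seq L) : size u = size v ->
  (forall j, j < size u -> nth one u j = nth one v j) -> u = v.
Proof. move=> S E; exact: (eq_from_nth S E). Qed.


Definition Pn (eta : L) := forall w, D w ->
  (forall i, i <= size w -> D (omega eta w i)) /\
  (forall i j, i <= size w -> j <= size w -> Pi (omega eta w i) = Pi (omega eta w j)).

Lemma normP eta : normalizer eta -> Pn eta. Proof. by case. Qed.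

Section PnTheory.
Variable eta : L.
Hypothesis Peta : Pn eta.
Local Notation c := (conj eta).

Lemma omega0 (w : seq L) : omega eta w 0 = eta :: w.
Proof. by rewrite /omega take0 drop0. Qed.

Lemma P_etal y : D [:: eta; y].
Proof. have [H _] := Peta (pg_dom_letter y); by have := H 0 isT; rewrite omega0. Qed.

Lemma P_N1 x : D [:: eta; x; inv eta].
Proof.
have Dx : D [:: x; inv eta].
  have := winvD (P_etal (inv x)); by rewrite /winv /= pg_invK.
have [H _] := Peta Dx; by have := H 0 isT; rewrite omega0.
Qed.

Lemma P_om1 x : D [:: c x; eta] /\ Pi [:: c x; eta] = Pi [:: eta; x].
Proof.
have [H1 H2] := Peta (pg_dom_letter x).
by have := H2 1 0 isT isT; have := H1 1 isT; rewrite omega0 /omega /=.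
Qed.

Lemma P_c1 : c one = one.
Proof.
have [D1 P1] := P_om1 one.
have D2 : D [:: one; eta] by have [] := @one_in [::] [:: eta] (pg_dom_letter eta).
apply: (rcancel D1 D2); rewrite P1 Pi_one_r Pi_one_l1 //.
Qed.

Lemma P_etaone : Pi [:: eta; one] = eta. Proof. exact: Pi_one_r. Qed.

Lemma P_cmul x y : D [:: x; y] -> c (Pi [:: x; y]) = Pi [:: c x; c y].
Proof.
move=> Dxy; have [H1 H2] := Peta Dxy.
have D2 := H1 2 isT; have E2 := H2 2 0 isT isT.
rewrite omega0 /omega /= in D2 E2.
have [D1 P1] := P_om1 (Pi [:: x; y]).
have H3 : D ([::] ++ [:: c x; c y] ++ [:: eta]) by [].
have D3 := assocD H3; have P3 := assocP H3; rewrite /= in D3 P3.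
apply: (rcancel D1 D3); rewrite P1 -P3 E2.
have H4 : D ([:: eta] ++ [:: x; y] ++ [::]) by have := H1 0 isT; rewrite omega0.
by rewrite (assocP H4).
Qed.

Lemma P_E3 x y : D [:: x; y] -> Pi [:: Pi [:: eta; x]; y] = Pi [:: eta; Pi [:: x; y]].
Proof.
move=> Dxy; have [H1 _] := Peta Dxy; have := H1 0 isT; rewrite omega0 => D0.
have H4 : D ([:: eta] ++ [:: x; y] ++ [::]) by [].
have H5 : D ([::] ++ [:: eta; x] ++ [:: y]) by [].
by rewrite -(assocP H5) (assocP H4).
Qed.

Lemma P_E2 x y : D [:: x; y] -> Pi [:: c x; Pi [:: eta; y]] = Pi [:: eta; Pi [:: x; y]].
Proof.
move=> Dxy; have [H1 H2] := Peta Dxy.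
have D1 := H1 1 isT; have E1 := H2 1 0 isT isT.
rewrite omega0 /omega /= in D1 E1.
have H4 : D ([:: eta] ++ [:: x; y] ++ [::]) by have := H1 0 isT; rewrite omega0.
have H5 : D ([:: c x] ++ [:: eta; y] ++ [::]) by [].
by rewrite -(assocP H5) /= E1 (assocP H4).
Qed.

Lemma P_mapD (w : seq L) : D w -> D (map c w).
Proof.
move=> Dw; have [H1 _] := Peta Dw; have := H1 (size w) (leqnn _).
by rewrite /omega take_size drop_size => /catDl.
Qed.

Lemma P_cinvK x : conj (inv eta) (c x) = x.
Proof.
have Dx : D [:: x; inv eta].
  have := winvD (P_etal (inv x)); by rewrite /winv /= pg_invK.
have Dx2 : D [:: x; inv eta; eta].
  by have := wwinv_D Dx; rewrite /winv /= pg_invK => /(@catDl [:: x; inv eta; eta] [:: inv x]).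
have Dx3 : D [:: eta; x; inv eta; eta].
  have [H1 _] := Peta Dx2; by have := H1 0 isT; rewrite omega0.
have [D5 P5] := @L5 [:: eta] [:: x; inv eta; eta] Dx3.
rewrite /winv /= in D5 P5.
have H6 : D ([:: inv eta] ++ [:: eta; x; inv eta] ++ [:: eta]) by [].
rewrite /conj pg_invK -(assocP H6) /= P5.
have H7 : D ([:: x] ++ [:: inv eta; eta] ++ [::]) by [].
rewrite (assocP H7) /=.
by have := winvw_P (pg_dom_letter eta); rewrite /winv /= => ->; rewrite Pi_one_r.
Qed.

End PnTheory.

Lemma simpl_map (f : seq L -> seq L) (h : L -> L) :
  simplicial_map f -> (forall x, f [:: x] = [:: h x]) ->
  forall w, D w -> f w = map h w.
Proof.
case=> fD fface _ fh w.
elim: {w}(size w) {-2}w (erefl (size w)) => [|n IH] w Sw Dw.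
  case: w Sw Dw => [|? ?] // _ Dw; have [_] := fD _ Dw; by case: (f [::]).
case: n IH Sw => [|n] IH Sw.
  by case: w Sw Dw => [|x [|]] // _ _; rewrite fh.
have [Df Sf] := fD _ Dw.
have F0 := fface w 0 Dw (ltac:(by rewrite Sw)) (leq0n _).
have Fn := fface w n.+2 Dw (ltac:(by rewrite Sw)) (ltac:(by rewrite Sw)).
rewrite IH in F0; last exact: faceD; last by rewrite size_face ?Sw.
rewrite IH in Fn; last (apply: faceD => //; by rewrite Sw); last by rewrite size_face ?Sw.
apply: eq_words; first by rewrite size_map Sf.
move=> j; rewrite Sf Sw => jn.
case: (ltnP j n.+1) => jl.
  have := congr1 (fun s => nth one s j) Fn.
  rewrite (nth_map one) ?size_face ?Sw // nth_face ?Sw // ?Sf //.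
  rewrite (nth_face (v:=f w)) ?Sf ?Sw //.
  have jl2 : j.+1 < n.+2 by [].
  by move=> E; rewrite !jl2 in E; rewrite (nth_map one) ?Sw // E.
have -> : j = j.-1.+1 by lia.
have := congr1 (fun s => nth one s j.-1) F0.
rewrite (nth_map one) ?size_face ?Sw //; try lia.
rewrite nth_face ?Sw //; try lia.
rewrite nth_face ?Sf //; try lia.
rewrite /=.
move=> E; rewrite -E (nth_map one) //; rewrite Sw; lia.
Qed.


Definition Gx (eta : L) (c : L -> L) (w : seq L) k :=
  mkseq (fun j => if j.+1 < k then c (nth one w j)
                  else if j.+1 == k then Pi [:: eta; nth one w j] else nth one w j) (size w).

Lemma size_Gx eta c w k : size (Gx eta c w k) = size w.
Proof. by rewrite size_mkseq. Qed.

Lemma nth_Gx eta c w k j : j < size w -> nth one (Gx eta c w k) j =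
  if j.+1 < k then c (nth one w j)
  else if j.+1 == k then Pi [:: eta; nth one w j] else nth one w j.
Proof. by move=> jw; rewrite nth_mkseq. Qed.

Lemma Gx_face eta w k : k <= (size w).+1 ->
  Gx eta (conj eta) w k = face k (omega eta w k.-1).
Proof.
move=> kw; apply: eq_words.
  by rewrite size_Gx size_face ?size_omega //; lia.
move=> j; rewrite size_Gx => jw.
rewrite nth_Gx // nth_face ?size_omega //; try lia.
rewrite !nth_omega; try lia.
repeat (case: ifP => //=; intros); try lia.
Qed.

Lemma Dpair (w : seq L) j : D w -> j.+1 < size w -> D [:: nth one w j; nth one w j.+1].
Proof.
move=> Dw jw.
have E : w = take j w ++ [:: nth one w j; nth one w j.+1] ++ drop j.+2 w.
  by rewrite -{1}(cat_take_drop j w) (drop_nth one) 1?(drop_nth one) //; lia.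
by rewrite E in Dw; move/catDr/catDl: Dw.
Qed.


Section Homotopy.
Variable eta : L.
Hypothesis Peta : Pn eta.
Local Notation c := (conj eta).

Lemma G_face (w : seq L) k i : D w -> 0 < size w -> k <= (size w).+1 -> i <= size w ->
  Gx eta c (face i w) (if i < k then k.-1 else k) = face i (Gx eta c w k).
Proof.
move=> Dw n0 kw iw; apply: eq_words.
  by rewrite size_Gx !size_face ?size_Gx.
move=> j; rewrite size_Gx size_face // => jn.
rewrite nth_Gx ?size_face //.
rewrite (nth_face (v := Gx _ _ _ _)) ?size_Gx //.
rewrite nth_face //.
rewrite !nth_Gx; try lia.
case: (ltnP i k) => ik.
all: repeat (case: ifP => //=; intros); try lia.
all: have Dj : D [:: nth one w j; nth one w j.+1] by apply: Dpair => //; lia.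
- by rewrite P_cmul.
- by rewrite P_E2.
- by rewrite P_E3.
Qed.

Lemma G_degen (w : seq L) k i : k <= (size w).+1 -> i <= size w ->
  Gx eta c (degen i w) (if i < k then k.+1 else k) = degen i (Gx eta c w k).
Proof.
move=> kw iw; apply: eq_words.
  by rewrite size_Gx !size_degen size_Gx.
move=> j; rewrite size_Gx size_degen => jn.
rewrite nth_Gx ?size_degen //.
rewrite (nth_degen (w := Gx _ _ _ _)) ?size_Gx //.
rewrite nth_degen //.
case: (ltnP i k) => ik.
all: repeat (case: ifP => //=; intros); try lia.
all: rewrite ?nth_Gx; try lia.
all: repeat (case: ifP => //=; intros); try lia.
all: rewrite ?P_c1 ?P_etaone //.
Qed.

Lemma G_hom : simplicial_homotopy (Gx eta c) (map c) id.
Proof.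
split.
- move=> w k Dw kw; rewrite size_Gx; split => //.
  rewrite Gx_face //; apply: faceD; last by rewrite size_omega //; lia.
  by have [H _] := Peta Dw; apply: H; lia.
- move=> w Dw; apply: eq_words; first by rewrite size_Gx size_map.
  move=> j; rewrite size_Gx => jw; rewrite nth_Gx // (nth_map one) // ifT //.
- move=> w Dw; apply: eq_words; first by rewrite size_Gx.
  by move=> j; rewrite size_Gx => jw; rewrite nth_Gx.
- move=> w k i Dw n0 kw iw; exact: G_face.
- move=> w k i Dw kw iw; exact: G_degen.
Qed.

End Homotopy.


Lemma Gx_degen_succ eta c (w : seq L) i : i <= size w ->
  Gx eta c (degen i w) i.+1 = map c (take i w) ++ eta :: drop i w.
Proof.
move=> iw; apply: eq_words.
  by rewrite size_Gx size_degen size_cat size_map /= size_take size_drop; case: ifP; lia.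
move=> j; rewrite size_Gx size_degen => jn.
rewrite nth_Gx ?size_degen // nth_degen // nth_cat size_map size_take.
have -> : (if i < size w then i else size w) = i by case: ifP; lia.
case: (ltnP j i) => ji.
  by rewrite ifT // (nth_map one) ?size_take; [rewrite nth_take|case: ifP; lia].
case: eqP => [->|ne]; first by rewrite subnn ltnn eqxx Pi_one_r.
rewrite ifF; last lia. rewrite ifF; last lia.
have -> : j - i = (j - i).-1.+1 by lia.
rewrite /= nth_drop; congr nth; lia.
Qed.

Section Surj.
Variable a : seq L -> seq L.
Variable F : seq L -> nat -> seq L.
Hypothesis aut : automorphism a.
Hypothesis hom : simplicial_homotopy F a id.

Let eta := nth one (F [:: one] 1) 0.
Let alpha x := nth one (a [:: x]) 0.

Lemma S_a1 x : a [:: x] = [:: alpha x].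
Proof.
case: aut => [[aD _ _] _]; have [_ S] := aD _ (pg_dom_letter x).
by rewrite /alpha; case: (a [:: x]) S => [|y [|]].
Qed.

Lemma S_aw (w : seq L) : D w -> a w = map alpha w.
Proof. case: aut => sa _; exact: (simpl_map sa S_a1). Qed.

Lemma S_F1one : F [:: one] 1 = [:: eta].
Proof.
case: hom => FD _ _ _ _; have [_ S] := FD _ 1 (pg_dom_letter one) isT.
by rewrite /eta; case: (F [:: one] 1) S => [|y [|]].
Qed.

Lemma D_one_x x : D [:: one; x].
Proof. by have [] := @one_in [::] [:: x] (pg_dom_letter x). Qed.

Lemma S_F1 x : F [:: x] 1 = [:: Pi [:: eta; x]].
Proof.
case: hom => FD Fa Fid Fface _.
have Dw := D_one_x x.
have [_ S] := FD _ 1 Dw isT.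
have F0 := Fface _ 1 0 Dw isT isT isT.
have F2 := Fface _ 1 2 Dw isT isT isT.
have F1 := Fface _ 1 1 Dw isT isT isT.
rewrite /= in F0 F1 F2.
rewrite /face /= Fid in F0; last exact: pg_dom_letter.
rewrite /face /= S_F1one in F2.
rewrite /face /= Pi_one_l1 in F1.
rewrite F1; case: (F [:: one; x] 1) S F0 F2 => [|p [|q []]] //= _; by move=> [->] [->].
Qed.

Lemma S_main n (w : seq L) : size w = n.+1 -> D w -> forall k, k <= n.+2 ->
  F w k = Gx eta alpha w k.
Proof.
case: hom => FD Fa Fid Fface _.
elim: n w => [|n IH] w Sw Dw k kn.
  case: w Sw Dw => [|x []] // _ Dw.
  case: k kn => [|[|[|]]] // _.
  - by rewrite Fid.
  - by rewrite S_F1.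
  - by rewrite Fa // S_a1.
have [_ SF] := FD _ k Dw (ltac:(by rewrite Sw)).
have F0 := Fface w k 0 Dw (ltac:(by rewrite Sw)) (ltac:(by rewrite Sw)) (leq0n _).
have Fn := Fface w k n.+2 Dw (ltac:(by rewrite Sw)) (ltac:(by rewrite Sw)) (ltac:(by rewrite Sw)).
rewrite IH in F0; first last.
- by case: ifP; lia.
- exact: faceD.
- by rewrite size_face ?Sw.
rewrite IH in Fn; first last.
- by case: ifP; lia.
- by apply: faceD; rewrite ?Sw.
- by rewrite size_face ?Sw.
apply: eq_words; first by rewrite size_Gx SF.
move=> j; rewrite SF Sw => jn.
case: (ltnP j n.+1) => jl.
  have := congr1 (fun s => nth one s j) Fn.
  rewrite nth_Gx ?size_face ?Sw //.
  rewrite (nth_face (v := F w k)) ?SF ?Sw //.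
  rewrite nth_Gx ?Sw //.
  rewrite nth_face ?Sw //.
  have jl2 : j.+1 < n.+2 by [].
  rewrite !jl2 => E; rewrite -E.
  by case: (ltnP n.+2 k) => nk; repeat (case: ifP => //=; intros); try lia.
have -> : j = j.-1.+1 by lia.
have := congr1 (fun s => nth one s j.-1) F0.
rewrite nth_Gx ?size_face ?Sw //; try lia.
rewrite (nth_face (v := F w k)) ?SF ?Sw //; try lia.
rewrite nth_Gx ?Sw //; try lia.
rewrite nth_face ?Sw //; try lia.
rewrite /= => E; rewrite -E.
by case: (posnP k) => nk; repeat (case: ifP => //=; intros); try lia.
Qed.

Lemma S_omD (w : seq L) i : D w -> i <= size w ->
  D (map alpha (take i w) ++ eta :: drop i w).
Proof.
move=> Dw iw; rewrite -Gx_degen_succ //.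
have Dd := degenD Dw iw.
rewrite -(@S_main (size w)) ?size_degen //; last lia.
by case: hom => FD _ _ _ _; case: (FD (degen i w) i.+1 Dd); rewrite ?size_degen //; lia.
Qed.

Lemma S_etal x : D [:: eta; x].
Proof. by have := @S_omD [:: x] 0 (pg_dom_letter x) isT. Qed.

Lemma S_comm x : D [:: alpha x; eta] /\ Pi [:: alpha x; eta] = Pi [:: eta; x].
Proof.
split; first by have := @S_omD [:: x] 1 (pg_dom_letter x) isT.
case: hom => FD Fa Fid Fface _.
have Dw : D [:: x; one].
  by have [] := @one_in [:: x] [::] (pg_dom_letter x).
have := Fface _ 2 1 Dw isT isT isT.
rewrite /= (@S_main 1 [:: x; one]) //.
have -> : face 1 [:: x; one] = [:: x] by rewrite /face /= Pi_one_r.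
rewrite S_F1 /Gx /face /= Pi_one_r.
by move=> [->].
Qed.

Lemma S_alpha x : alpha x = conj eta x.
Proof.
have Dx : D [:: x; inv eta].
  have := winvD (S_etal (inv x)); by rewrite /winv /= pg_invK.
have D3 : D [:: eta; x; inv eta] by have := @S_omD _ 0 Dx isT.
have [Dc Pc] := S_comm x.
have [D5 P5] := @R5 [:: alpha x] [:: eta] Dc.
rewrite letter1 /winv /= in P5; rewrite /winv /= in D5.
have H1 : D ([::] ++ [:: alpha x; eta] ++ [:: inv eta]) by [].
have H2 : D ([::] ++ [:: eta; x] ++ [:: inv eta]) by [].
by rewrite -P5 (assocP H1) /= Pc /conj (assocP H2).
Qed.

Lemma S_omegaD (w : seq L) i : D w -> i <= size w -> D (omega eta w i).
Proof.
move=> Dw iw; rewrite /omega (eq_map (g := alpha)); first exact: S_omD.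
by move=> x; rewrite S_alpha.
Qed.

Lemma S_step (w : seq L) i : D w -> i < size w ->
  Pi (omega eta w i) = Pi (omega eta w i.+1).
Proof.
move=> Dw iw.
rewrite -(@face_Pi i.+1 (omega eta w i)) ?S_omegaD ?size_omega //; try lia.
rewrite -(@face_Pi i.+1 (omega eta w i.+1)) ?S_omegaD ?size_omega //; try lia.
congr Pi; apply: eq_words; first by rewrite !size_face ?size_omega //; lia.
move=> j; rewrite size_face ?size_omega //; try lia.
move=> jn.
rewrite !nth_face ?size_omega //; try lia.
rewrite !nth_omega //; try lia.
repeat (case: ifP => //=; intros); try lia.
- by have [_ E] := S_comm (nth one w j); rewrite S_alpha in E; rewrite E.
- by apply: S_omegaD.
- by apply: S_omegaD => //; lia.
Qed.

Lemma S_Pn : Pn eta.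
Proof.
move=> w Dw; split; first by move=> i; exact: S_omegaD.
suff H : forall i, i <= size w -> Pi (omega eta w i) = Pi (omega eta w 0).
  by move=> i j iw jw; rewrite H // H.
elim=> // i IH iw; rewrite -S_step //; apply: IH; lia.
Qed.

Lemma S_norm : normalizer eta.
Proof.
split.
- exact: (P_N1 S_Pn).
- exists a; split => // x; by rewrite S_a1 S_alpha.
- exact: S_Pn.
Qed.

Lemma S_eq (w : seq L) : D w -> a w = map (conj eta) w.
Proof. by move=> Dw; rewrite S_aw //; apply: eq_map => x; rewrite S_alpha. Qed.

Lemma S_exists : exists2 e, normalizer e & forall w, D w -> a w = map (conj e) w.
Proof. exists eta; [exact: S_norm | exact: S_eq]. Qed.

End Surj.


Lemma aut_ext (a f : seq L -> seq L) : automorphism a ->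
  (forall w, D w -> a w = f w) -> automorphism f.
Proof.
case=> [[aD af ad] [g [[gD gf gd] ga ag]]] E.
split.
  split.
  - by move=> w Dw; rewrite -E //; exact: aD.
  - move=> w i Dw n0 iw; rewrite -!E //; [exact: af | exact: faceD].
  - move=> w i Dw iw; rewrite -!E //; [exact: ad | exact: degenD].
exists g; split => //.
- by move=> w Dw; rewrite -E // ga.
- by move=> w Dw; rewrite -E ?ag //; case: (gD w Dw).
Qed.

Lemma simpl_comp (f g : seq L -> seq L) : simplicial_map f -> simplicial_map g ->
  simplicial_map (fun w => f (g w)).
Proof.
case=> fD ff fd [gD gf gd]; split.
- move=> w Dw; have [Dg Sg] := gD w Dw; have [Df Sf] := fD _ Dg; by rewrite Sf.
- move=> w i Dw n0 iw; have [Dg Sg] := gD w Dw.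
  by rewrite gf // ff // Sg.
- move=> w i Dw iw; have [Dg Sg] := gD w Dw.
  by rewrite gd // fd // Sg.
Qed.

Lemma aut_comp (f g : seq L -> seq L) : automorphism f -> automorphism g ->
  automorphism (fun w => f (g w)).
Proof.
case=> sf [f' [sf' f'f ff']] [sg [g' [sg' g'g gg']]].
split; first exact: simpl_comp.
exists (fun w => g' (f' w)); split; first exact: simpl_comp.
- move=> w Dw; case: sg => gD _ _; have [Dg _] := gD w Dw.
  by rewrite f'f // g'g.
- move=> w Dw; case: sf' => fD _ _; have [Df _] := fD w Dw.
  by rewrite gg' // ff'.
Qed.

Lemma aut_id : automorphism (@id (seq L)).
Proof. by split; [split => //| exists id; split => //; split]. Qed.

Lemma N_aut (eta : L) : normalizer eta -> automorphism (map (conj eta)).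
Proof.
case=> _ [a [aut ax]] _; apply: (aut_ext aut); case: aut => sa _.
exact: (simpl_map sa ax).
Qed.

Lemma nth_winv (s : seq L) j : j < size s -> nth one (winv s) j = inv (nth one s (size s - j.+1)).
Proof.
move=> js; rewrite /winv nth_rev size_map // (nth_map one) //; lia.
Qed.

Lemma size_winv (s : seq L) : size (winv s) = size s.
Proof. by rewrite /winv size_rev size_map. Qed.

Section Inverse.
Variable eta : L.
Hypothesis Neta : normalizer eta.
Local Notation c := (conj eta).
Local Notation c' := (conj (inv eta)).

Lemma I_P : Pn eta. Proof. exact: normP. Qed.

Lemma I_surj x : exists z, c z = x /\ c' x = z.
Proof.
case: Neta => _ [a [[sa [g [sg ga ag]]] ax]] _.
case: (sg) => gD _ _; have [Dg Sg] := gD _ (pg_dom_letter x).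
have E := ag _ (pg_dom_letter x).
case: (g [:: x]) Dg Sg E => [|z [|]] // _ _ E.
rewrite ax in E; case: E => E; exists z; split => //.
by rewrite -E P_cinvK //; exact: I_P.
Qed.

Lemma I_ccK x : c (c' x) = x.
Proof. by have [z [<- ->]] := I_surj x. Qed.

Lemma I_gmap (w : seq L) : D w -> D (map c' w).
Proof.
case: Neta => _ [a [[sa [g [sg ga ag]]] ax]] _.
have gx : forall x, g [:: x] = [:: c' x].
  move=> x; case: (sg) => gD _ _; have [Dg Sg] := gD _ (pg_dom_letter x).
  have E := ag _ (pg_dom_letter x).
  case: (g [:: x]) Dg Sg E => [|z [|]] // _ _ E.
  rewrite ax in E; case: E => <-; by rewrite P_cinvK //; exact: I_P.
move=> Dw; rewrite -(simpl_map sg gx Dw); by case: sg => gD _ _; case: (gD w Dw).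
Qed.

Lemma I_Dr z : D [:: z; eta].
Proof. by rewrite -(I_ccK z); case: (P_om1 I_P (c' z)). Qed.

Lemma I_Dl z : D [:: inv eta; z].
Proof. by have := winvD (I_Dr (inv z)); rewrite /winv /= pg_invK. Qed.

Lemma I_cinv : c (inv eta) = inv eta.
Proof.
have H : D ([::] ++ [:: eta; inv eta] ++ [:: inv eta]) by exact: (P_N1 I_P).
rewrite /conj (assocP H) /=.
have := wwinv_P (pg_dom_letter eta); rewrite /winv /= => ->.
by rewrite Pi_one_l1.
Qed.

Lemma I_N1 y : D [:: inv eta; y; eta].
Proof.
have [H _] := I_P (I_Dl (c' y)); have := H 2 isT.
by rewrite /omega /= I_cinv I_ccK.
Qed.

Lemma I_invc x : inv (c' (inv x)) = c' x.
Proof.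
rewrite /conj -Pi_winv; last by rewrite pg_invK; exact: I_N1.
by rewrite /winv /= !pg_invK.
Qed.

Lemma I_Pn : Pn (inv eta).
Proof.
move=> w Dw.
set V := map c' (winv w).
have DV : D V by apply: I_gmap; exact: winvD.
have SV : size V = size w by rewrite size_map size_winv.
have E : forall i, i <= size w -> omega (inv eta) w i = winv (omega eta V (size w - i)).
  move=> i iw; apply: eq_words.
    by rewrite size_winv !size_omega ?SV //; lia.
  move=> j; rewrite size_omega // => jw.
  rewrite nth_winv ?size_omega ?SV //; try lia.
  rewrite !nth_omega ?SV //; try lia.
  rewrite /V.
  repeat (case: ifP => //=; intros); try lia.
  - rewrite (nth_map one) ?size_winv; last lia.
    rewrite nth_winv; last lia.
    have -> : size w - ((size w).+1 - j.+1).-1.+1 = j by lia.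
    by rewrite I_invc.
  - rewrite (nth_map one) ?size_winv; last lia.
    rewrite nth_winv; last lia.
    have -> : size w - ((size w).+1 - j.+1).+1 = j.-1 by lia.
    by rewrite I_ccK pg_invK.
have [H1 H2] := I_P DV.
split => [i iw | i j iw jw]; rewrite !E //.
  by apply: winvD; apply: H1; lia.
rewrite !Pi_winv; try (apply: H1; lia).
congr inv; apply: H2; lia.
Qed.

Lemma I_norm : normalizer (inv eta).
Proof.
split; first exact: (P_N1 I_Pn); last exact: I_Pn.
case: Neta => _ [a [[sa [g [sg ga ag]]] ax]] _.
have gx : forall x, g [:: x] = [:: c' x].
  move=> x; case: (sg) => gD _ _; have [Dg Sg] := gD _ (pg_dom_letter x).
  have E := ag _ (pg_dom_letter x).
  case: (g [:: x]) Dg Sg E => [|z [|]] // _ _ E.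
  rewrite ax in E; case: E => <-; by rewrite P_cinvK //; exact: I_P.
exists g; split => //; split => //; exists a; split => //.
Qed.

End Inverse.


Section Product.
Variables eta theta : L.
Hypothesis Pe : Pn eta.
Hypothesis Pt : Pn theta.
Local Notation rho := (Pi [:: eta; theta]).

Lemma cj_mul x : conj rho x = conj eta (conj theta x).
Proof.
have D1 : D [:: eta; theta; inv x].
  have [H _] := Pe (P_etal Pt (inv x)); by have := H 0 isT; rewrite omega0.
have D3 : D [:: x; inv theta; inv eta].
  by have := winvD D1; rewrite /winv /= pg_invK.
have D4 : D [:: theta; x; inv theta; inv eta].
  have [H _] := Pt D3; by have := H 0 isT; rewrite omega0.
have D5 : D [:: eta; theta; x; inv theta; inv eta].
  have [H _] := Pe D4; by have := H 0 isT; rewrite omega0.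
have H1 : D ([:: eta] ++ [:: theta; x; inv theta] ++ [:: inv eta]) by [].
have H2 : D ([::] ++ [:: eta; theta] ++ [:: x; inv theta; inv eta]) by [].
have H3 := assocD H2; rewrite /= in H3.
have H4 : D ([:: rho; x] ++ [:: inv theta; inv eta] ++ [::]) by [].
rewrite /conj.
have -> : Pi [:: eta; Pi [:: theta; x; inv theta]; inv eta] = Pi [:: eta; theta; x; inv theta; inv eta].
  by rewrite (assocP H1).
rewrite (assocP H2) /= (assocP H4) /=.
have E : Pi [:: inv theta; inv eta] = inv rho.
  rewrite -Pi_winv; [by [] | exact: (P_etal Pe theta)].
by rewrite E.
Qed.

Lemma M_Pn : Pn rho.
Proof.
move=> w Dw.
have E : forall i, i <= size w ->
    omega rho w i = face i.+1 (omega eta (omega theta w i) i).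
  move=> i iw; apply: eq_words.
    by rewrite size_face !size_omega ?size_omega //; lia.
  move=> j; rewrite size_omega // => jw.
  rewrite nth_face ?size_omega ?size_omega //; try lia.
  rewrite !nth_omega ?size_omega //; try lia.
  repeat (case: ifP => //=; intros); try lia.
  - by rewrite cj_mul.
have [Ht1 Ht2] := Pt Dw.
have DW : forall i, i <= size w -> D (omega eta (omega theta w i) i).
  move=> i iw; have [H _] := Pe (Ht1 i iw); apply: H; rewrite size_omega //; lia.
have PW : forall i, i <= size w -> Pi (omega rho w i) = Pi [:: eta; Pi (omega theta w 0)].
  move=> i iw; rewrite E // face_Pi; [|exact: DW|rewrite !size_omega ?size_omega //; lia].
  have [_ H] := Pe (Ht1 i iw); rewrite (H i 0) ?size_omega //; try lia.
  rewrite omega0.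
  have H6 : D (eta :: omega theta w i).
    by have [H' _] := Pe (Ht1 i iw); have := H' 0 isT; rewrite omega0.
  have H5 : D ([:: eta] ++ omega theta w i ++ [::]) by rewrite cats0.
  rewrite -[eta :: _]/([:: eta] ++ omega theta w i) -{1}(cats0 (omega theta w i)).
  by rewrite (assocP H5) (Ht2 i 0).
split => [i iw | i j iw jw]; last by rewrite !PW.
rewrite E //; apply: faceD; first exact: DW.
rewrite !size_omega ?size_omega //; lia.
Qed.

End Product.

Lemma N_mul (eta theta : L) : normalizer eta -> normalizer theta ->
  normalizer (Pi [:: eta; theta]).
Proof.
move=> Ne Nt; have Pe := normP Ne; have Pt := normP Nt.
split; first exact: (P_N1 (M_Pn Pe Pt)); last exact: M_Pn.
exists (map (conj (Pi [:: eta; theta]))); split => //.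
apply: (aut_ext (aut_comp (N_aut Ne) (N_aut Nt))) => w _.
by rewrite -map_comp; apply: eq_map => x /=; rewrite cj_mul.
Qed.

Lemma conj_one x : conj one x = x.
Proof.
have H : D ([::] ++ [:: one; x] ++ [:: one]).
  have [H _] := @one_in [:: one; x] [::] (D_one_x x); by rewrite /= in H.
by rewrite /conj inv_one (assocP H) /= Pi_one_l1 Pi_one_r.
Qed.

Lemma N_one : normalizer one.
Proof.
have Po : Pn one.
  move=> w Dw.
  have E : forall i, i <= size w -> omega one w i = degen i w.
    move=> i iw; rewrite /omega /degen (eq_map conj_one) map_id //.
  split => [i iw|i j iw jw]; rewrite !E //; first exact: degenD.
  by rewrite !degen_Pi.
split; first exact: (P_N1 Po); last exact: Po.
exists id; split; first exact: aut_id.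
by move=> x; rewrite conj_one.
Qed.

End PG.

Lemma N_allD (M : partialGroup) (w : seq M) : all_in (@normalizer M) w -> pg_dom w.
Proof.
elim: w => [|x w IH] /=; first by move=> _; exact: D_nil.
case=> Nx /IH Dw; have [H _] := normP Nx Dw; by have := H 0 isT; rewrite omega0.
Qed.

Lemma Pi_cons (M : partialGroup) (x : M) w : pg_dom (x :: w) ->
  pg_prod (x :: w) = pg_prod [:: x; pg_prod w].
Proof.
move=> D; have H : pg_dom ([:: x] ++ w ++ [::]) by rewrite cats0.
by have := assocP H; rewrite cats0.
Qed.

Lemma N_allP (M : partialGroup) (w : seq M) : all_in (@normalizer M) w -> normalizer (pg_prod w).
Proof.
elim: w => [|x w IH] /=; first by move=> _; exact: N_one.
move=> Hw; have Dw : pg_dom (x :: w) by apply: N_allD.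
case: Hw => Nx Hw.
by rewrite Pi_cons //; apply: N_mul => //; apply: IH.
Qed.

Lemma Z_allN (M : partialGroup) (w : seq M) : all_in (@center M) w -> all_in (@normalizer M) w.
Proof. by elim: w => [|x w IH] //= [[Nx _] /IH]. Qed.

Lemma Z_allP (M : partialGroup) (w : seq M) : all_in (@center M) w -> center (pg_prod w).
Proof.
move=> Hw; split; first exact/N_allP/Z_allN.
elim: w Hw => [|x w IH] /=; first by move=> _ y; exact: conj_one.
move=> Hw; have Dw : pg_dom (x :: w) by apply/N_allD/Z_allN.
case: Hw => [[Nx Cx] Hw] y.
have Nw := N_allP (Z_allN Hw).
rewrite Pi_cons // cj_mul.
- by rewrite (IH Hw y) Cx.
- exact: normP.
- exact: normP.
Qed.

Theorem lemma5p7 (M : partialGroup) :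
  subgroup (@normalizer M) /\
  abelian_subgroup (@center M) /\
  exists phi : M -> seq M -> seq M,
    [/\ (forall eta, normalizer eta -> inner_aut (phi eta)),
        (forall eta theta, normalizer eta -> normalizer theta ->
           forall w, pg_dom w ->
             phi (pg_prod [:: eta; theta]) w = phi eta (phi theta w)),
        (forall a, inner_aut a ->
           exists2 eta, normalizer eta & forall w, pg_dom w -> a w = phi eta w) &
        (forall eta, normalizer eta ->
           (center eta <-> forall w, pg_dom w -> phi eta w = w))].
Proof.
split; [|split].
- split; [exact: N_allD | exact: N_allP | move=> x Nx; exact: I_norm].
- split.
    split; [move=> w /Z_allN; exact: N_allD | exact: Z_allP |].
    move=> x [Nx Cx]; split; first exact: I_norm.
    move=> y; rewrite -{1}(Cx y) P_cinvK //; exact: normP.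
  move=> x y [Nx Cx] _; have [_ E] := P_om1 (normP Nx) y.
  by rewrite -E Cx.
- exists (fun eta w => map (conj eta) w); split.
  + move=> eta Ne; split; first exact: N_aut.
    exists (Gx eta (conj eta)); exact: G_hom (normP Ne).
  + move=> eta theta Ne Nt w _; rewrite -map_comp; apply: eq_map => x /=.
    rewrite cj_mul //; exact: normP.
  + move=> a [aut [F hom]]; exact: S_exists aut hom.
  + move=> eta Ne; split.
      by move=> [_ C] w _; rewrite (eq_map C) map_id.
    move=> H; split => // y; have := H [:: y] (pg_dom_letter y); by case.
Qed.
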